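(* For every $n\in\mathbb{N}$: \begin{align*} \sum_{j=0}^{n}\sum_{i=0}^{j}\frac{\binom{2n+2}{i}}{\binom{2n+1}{j}}&=(n+1)\sum_{k=0}^{n}\frac{1}{2k+1}=(n+1)\Big(H_{2n+1}-\frac{H_n}{2}\Big),\\ \sum_{j=0}^{n}\sum_{i=0}^{j}\frac{\binom{2n+3}{i}}{\binom{2n+1}{j}}&=(n+1)H_{n+1},\\ \sum_{j=0}^{n}\sum_{i=0}^{j}\frac{\binom{2n+1}{i}}{\binom{2n}{j}}&=\frac{2^{2n-1}}{\binom{2n}{n}}+\Big(n+\frac12\Big)\Big(H_{2n+1}-\frac{H_n}{2}\Big),\\ \sum_{j=0}^{n}\sum_{i=0}^{j}\frac{\binom{2n+2}{i}}{\binom{2n}{j}}&=\frac{2^{2n}}{\binom{2n}{n}}+\Big(n+\frac12\Big)H_n. \end{align*}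
   Context: $H_n=\sum_{k=1}^{n}\frac1k$ is the $n$-th harmonic number ($H_0=0$). *)

(* Defs.v *)
From HB Require Import structures.
From mathcomp Require Import all_boot all_order all_algebra.
Set Implicit Arguments. Unset Strict Implicit. Unset Printing Implicit Defensive.
Import Order.TTheory GRing.Theory Num.Theory.
Local Open Scope ring_scope.

Definition harmonic (n : nat) : rat := \sum_(1 <= k < n.+1) (k%:R)^-1.

Definition dsum (n a b : nat) : rat :=
  \sum_(0 <= j < n.+1) \sum_(0 <= i < j.+1) ('C(a, i))%:R / ('C(b, j))%:R.

(* Main.v *)
Require Import Defs.
From HB Require Import structures.
From mathcomp Require Import all_boot all_order all_algebra.
From mathcomp Require Import ring lra zify.
Import Order.TTheory GRing.Theory Num.Theory.
Local Open Scope ring_scope.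

Definition Tn (a j : nat) : nat := (\sum_(0 <= i < j.+1) 'C(a, i))%N.
Definition xx (b j : nat) : rat := (Tn b j)%:R / ('C(b, j))%:R.
Definition SS (b m : nat) : rat := \sum_(0 <= j < m.+1) xx b j.

Lemma TnS a j : Tn a j.+1 = (Tn a j + 'C(a, j.+1))%N.
Proof. by rewrite /Tn big_nat_recr. Qed.
Lemma Tn0 a : Tn a 0 = 1%N.
Proof. by rewrite /Tn big_nat1 bin0. Qed.

Lemma Tn_pascal b j : (Tn b.+1 j + 'C(b, j) = 2 * Tn b j)%N.
Proof.
elim: j => [|j IH]; first by rewrite !Tn0 bin0.
rewrite !TnS binS. lia.
Qed.

Lemma Tn_mix c j : (Tn c.+1 j.+1 = Tn c j.+1 + Tn c j)%N.
Proof.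
elim: j => [|j IH].
  by rewrite !TnS !Tn0 binS bin0.
rewrite TnS IH !TnS binS. lia.
Qed.

Lemma sum_bin n : (\sum_(0 <= i < n.+1) 'C(n, i) = 2 ^ n)%N.
Proof.
have := expnDn 1 1 n. rewrite addn1 big_mkord => ->.
by apply: eq_bigr => i _; rewrite !exp1n !muln1.
Qed.

Lemma bin_half N k : (k <= N.+1)%N ->
  (\sum_(0 <= i < k) 'C(N, i) = \sum_(N.+1 - k <= i < N.+1) 'C(N, i))%N.
Proof.
elim: k => [|k IH] hk; first by rewrite subn0 big_geq // big_geq.
rewrite big_nat_recr //= IH; last by lia.
have -> : (N.+1 - k = (N.+1 - k.+1).+1)%N by lia.
rewrite [in RHS]big_ltn; last by lia.
rewrite bin_sub; last by lia.
by rewrite addnC.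
Qed.

Lemma Tn_mid n : Tn (2 * n).+1 n = (2 ^ (2 * n))%N.
Proof.
have H := sum_bin (2 * n).+1.
rewrite (big_cat_nat _ (n := n.+1)) //= in H; last by lia.
have E : ((2 * n).+2 - n.+1 = n.+1)%N by lia.
have E2 := @bin_half (2 * n).+1 n.+1.
rewrite E in E2. rewrite -E2 in H; last by lia.
rewrite /Tn. rewrite expnS in H. move: H. set s := (\sum_(0 <= i < n.+1) _)%N. lia.
Qed.

Lemma nzS (d : nat) : 1 + d%:R != 0 :> rat.
Proof. apply/lt0r_neq0; have := ler0n rat d; lra. Qed.

Lemma xx_mix k d :
  ((k + d).+2)%:R * xx (k + d).+2 k.+1 =
  (d.+1)%:R * xx (k + d).+1 k.+1 + (k.+1)%:R * xx (k + d).+1 k.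
Proof.
rewrite /xx Tn_mix natrD.
set c := (k + d).+1.
have B1 := mul_bin_down c.+1 k.+1.
have B2 := mul_bin_left c k.
have e1 : (c.+1 - k.+1 = d.+1)%N by rewrite /c; lia.
have e2 : (c - k = d.+1)%N by rewrite /c; lia.
rewrite e1 /= in B1. rewrite e2 in B2.
have hA : ('C(c, k.+1) > 0)%N by rewrite bin_gt0 /c; lia.
have hB : ('C(c, k) > 0)%N by rewrite bin_gt0 /c; lia.
have hD : ('C(c.+1, k.+1) > 0)%N by rewrite bin_gt0 /c; lia.
have B1r : (c.+1)%:R * ('C(c, k.+1))%:R = (d.+1)%:R * ('C(c.+1, k.+1))%:R :> rat
  by rewrite -!natrM B1.
have B2r : (k.+1)%:R * ('C(c, k.+1))%:R = (d.+1)%:R * ('C(c, k))%:R :> rat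
  by rewrite -!natrM B2.
set A := ('C(c, k.+1))%:R : rat in B1r B2r *.
set B := ('C(c, k))%:R : rat in B2r *.
set D := ('C(c.+1, k.+1))%:R : rat in B1r *.
have nA : A != 0 by rewrite pnatr_eq0 -lt0n.
have nB : B != 0 by rewrite pnatr_eq0 -lt0n.
have nD : D != 0 by rewrite pnatr_eq0 -lt0n.
have nd : (d.+1)%:R != 0 :> rat by rewrite pnatr_eq0.
have -> : D = (c.+1)%:R * A / (d.+1)%:R.
    by rewrite B1r; field; apply: nzS.
have -> : B = (k.+1)%:R * A / (d.+1)%:R by rewrite B2r; field; apply: nzS.
have nc : (c.+1)%:R != 0 :> rat by rewrite pnatr_eq0.
have nk : (k.+1)%:R != 0 :> rat by rewrite pnatr_eq0.
field. by rewrite !nzS nA.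
Qed.

Lemma xx0 b : xx b 0 = 1.
Proof. by rewrite /xx Tn0 bin0 divr1. Qed.

Lemma SS0 b : SS b 0 = 1.
Proof. by rewrite /SS big_nat1 xx0. Qed.

Lemma SSS b m : SS b m.+1 = SS b m + xx b m.+1.
Proof. by rewrite /SS big_nat_recr. Qed.

Lemma SS_rel m c : (m <= c)%N ->
  (c.+1)%:R * SS c.+1 m = (c.+2)%:R * SS c m - (m.+1)%:R * xx c m.
Proof.
elim: m c => [|m IH] c hm.
  rewrite !SS0 xx0 !mulr1. rewrite -[(c.+2)%:R]natr1. ring.
have [d Ec] : exists d, c = (m + d).+1 by exists (c - m.+1)%N; lia.
subst c.
rewrite !SSS mulrDr IH; last by lia.
rewrite xx_mix.
rewrite -!natr1 !natrD. ring.
Qed.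

Definition On (n : nat) : rat := \sum_(0 <= k < n.+1) ((2 * k + 1)%:R)^-1.

Lemma OnS n : On n.+1 = On n + ((2 * n + 3)%:R)^-1.
Proof. rewrite /On big_nat_recr //=. do 3 f_equal. lia. Qed.

Lemma xx_odd n : xx (2 * n).+1 n = 2 ^+ (2 * n) / ('C((2 * n).+1, n))%:R.
Proof. by rewrite /xx Tn_mid natrX. Qed.

Lemma xx_even n : xx (2 * n) n = (2 ^+ (2 * n) + ('C(2 * n, n))%:R) / 2 / ('C(2 * n, n))%:R.
Proof.
rewrite /xx. have := Tn_pascal (2 * n) n. rewrite Tn_mid => H.
have -> : (Tn (2 * n) n)%:R = (2 ^+ (2 * n) + ('C(2 * n, n))%:R) / 2 :> rat.
  have H' : (2 * Tn (2 * n) n)%:R = (2 ^ (2 * n) + 'C(2 * n, n))%:R :> rat by rewrite H.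
  rewrite natrM natrD natrX in H'. by rewrite -H'; field.
by [].
Qed.

Lemma binC_odd n : ('C((2 * n).+1, n))%:R = ((2 * n).+1)%:R * ('C(2 * n, n))%:R / (n.+1)%:R :> rat.
Proof.
have := mul_bin_down (2 * n).+1 n. have -> : ((2 * n).+1 - n = n.+1)%N by lia.
move=> H. have H' : ((2 * n).+1)%:R * ('C(2 * n, n))%:R = (n.+1)%:R * ('C((2 * n).+1, n))%:R :> rat
  by rewrite -!natrM H.
rewrite H'. field. apply: nzS.
Qed.

Lemma binC_even n : ('C((2 * n).+2, n.+1))%:R = 2 * ((2 * n).+1)%:R * ('C(2 * n, n))%:R / (n.+1)%:R :> rat.
Proof.
have := mul_bin_diag (2 * n).+2 n. move=> H /=.
have H' : ((2 * n).+2)%:R * ('C((2 * n).+1, n))%:R = (n.+1)%:R * ('C((2 * n).+2, n.+1))%:R :> rat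
  by rewrite -!natrM H.
have nn : (n.+1)%:R != 0 :> rat by rewrite pnatr_eq0.
have -> : ('C((2 * n).+2, n.+1))%:R = ((2 * n).+2)%:R * ('C((2 * n).+1, n))%:R / (n.+1)%:R :> rat.
  rewrite H'. field. apply: nzS.
rewrite binC_odd. rewrite -!natr1 ?natrD ?natrM. field. by rewrite addrC nzS.
Qed.

Lemma nzC n : ('C(2 * n, n))%:R != 0 :> rat.
Proof. rewrite pnatr_eq0 -lt0n bin_gt0. lia. Qed.

Lemma SS_even n : SS (2 * n) n =
  2 ^+ (2 * n) / (4 * ('C(2 * n, n))%:R) + (n.+1)%:R / 2 + ((2 * n).+1)%:R / 4 * On n.
Proof.
elim: n => [|n IH].
  rewrite SS0 /On big_nat1 /= expr0 bin0. by field.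
have E : (2 * n.+1 = (2 * n).+2)%N by lia.
have hC := nzC n.
have X1 := xx_even n.+1. rewrite E in X1.
have B1 := binC_even n.
rewrite E SSS X1 B1 OnS.
have R1 := @SS_rel n (2 * n).+1 ltac:(lia).
have R0 := @SS_rel n (2 * n) ltac:(lia).
have -> : SS (2 * n).+2 n = (((2 * n).+3)%:R * SS (2 * n).+1 n - (n.+1)%:R * xx (2 * n).+1 n) / ((2 * n).+2)%:R.
  rewrite -R1. field. apply/lt0r_neq0; have := ler0n rat n; lra.
have -> : SS (2 * n).+1 n = (((2 * n).+2)%:R * SS (2 * n) n - (n.+1)%:R * xx (2 * n) n) / ((2 * n).+1)%:R.
  rewrite -R0. field. apply/lt0r_neq0; have := ler0n rat n; lra.
rewrite IH xx_even xx_odd binC_odd.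
rewrite !exprS.
have -> : (2 * n + 3)%N = (2 * n).+3 by lia.
set t := (2:rat) ^+ (2 * n).
set C := ('C(2 * n, n))%:R : rat in hC *.
set O := On n.
rewrite -!natr1 ?natrD ?natrM.
field.
apply/and5P; split; try exact: hC; apply/lt0r_neq0; have := ler0n rat n; lra.
Qed.

Lemma SS_odd n : SS (2 * n).+1 n = (n.+1)%:R / 2 * (1 + On n).
Proof.
have R0 := @SS_rel n (2 * n) ltac:(lia).
have -> : SS (2 * n).+1 n = (((2 * n).+2)%:R * SS (2 * n) n - (n.+1)%:R * xx (2 * n) n) / ((2 * n).+1)%:R.
  rewrite -R0. field. apply/lt0r_neq0; have := ler0n rat n; lra.
have hC := nzC n.
rewrite SS_even xx_even.
set t := (2:rat) ^+ (2 * n).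
set C := ('C(2 * n, n))%:R : rat in hC *.
set O := On n.
rewrite -!natr1 ?natrD ?natrM.
field.
apply/andP; split; try exact: hC; apply/lt0r_neq0; have := ler0n rat n; lra.
Qed.

Lemma dsumS n a b : dsum n.+1 a b = dsum n a b + (Tn a n.+1)%:R / ('C(b, n.+1))%:R.
Proof.
rewrite /dsum big_nat_recr //=. congr (_ + _).
by rewrite -mulr_suml /Tn natr_sum.
Qed.

Lemma dsum0 a b : dsum 0 a b = 1.
Proof. by rewrite /dsum !big_nat1 !bin0 divr1. Qed.

Lemma harmS k : harmonic k.+1 = harmonic k + ((k.+1)%:R)^-1.
Proof. by rewrite /harmonic big_nat_recr. Qed.

Lemma dsum1 n b : (n <= b)%N -> dsum n b.+1 b = 2 * SS b n - (n.+1)%:R.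
Proof.
elim: n => [|n IH] hn; first by rewrite dsum0 SS0; field.
rewrite dsumS SSS IH; last by lia.
have P := Tn_pascal b n.+1.
have P' : (Tn b.+1 n.+1)%:R = 2 * (Tn b n.+1)%:R - ('C(b, n.+1))%:R :> rat.
  have H : ((Tn b.+1 n.+1 + 'C(b, n.+1))%:R = (2 * Tn b n.+1)%:R :> rat) by rewrite P.
  rewrite natrD natrM in H. lra.
have hC : ('C(b, n.+1))%:R != 0 :> rat by rewrite pnatr_eq0 -lt0n bin_gt0.
rewrite P' /xx -natr1. field. exact: hC.
Qed.

Lemma dsum2 n b : (n <= b)%N ->
  dsum n b.+2 b = 4 * SS b n - 2 * (n.+1)%:R
                  - (b.+1)%:R * (harmonic b.+1 - harmonic (b - n)).
Proof.
elim: n => [|n IH] hn.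
  rewrite dsum0 SS0 subn0 harmS. field. exact: nzS.
have [d Eb] : exists d, b = (n + d).+1 by exists (b - n.+1)%N; lia.
rewrite dsumS SSS IH; last by lia.
have E1 : (b - n = d.+1)%N by lia.
have E2 : (b - n.+1 = d)%N by lia.
rewrite E1 E2 harmS.
have P1 := Tn_pascal b.+1 n.+1.
have P0 := Tn_pascal b n.+1.
have H1 : ((Tn b.+2 n.+1 + 'C(b.+1, n.+1))%:R = (2 * Tn b.+1 n.+1)%:R :> rat) by rewrite P1.
have H0 : ((Tn b.+1 n.+1 + 'C(b, n.+1))%:R = (2 * Tn b n.+1)%:R :> rat) by rewrite P0.
rewrite natrD natrM in H1. rewrite natrD natrM in H0.
have B := mul_bin_down b.+1 n.+1.
have E3 : (b.+1 - n.+1 = d.+1)%N by lia.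
rewrite E3 /= in B.
have HB : (b.+1)%:R * ('C(b, n.+1))%:R = (d.+1)%:R * ('C(b.+1, n.+1))%:R :> rat by rewrite -!natrM B.
have hC : ('C(b, n.+1))%:R != 0 :> rat by rewrite pnatr_eq0 -lt0n bin_gt0.
have -> : (Tn b.+2 n.+1)%:R = 4 * (Tn b n.+1)%:R - 2 * ('C(b, n.+1))%:R - ('C(b.+1, n.+1))%:R :> rat by lra.
have -> : ('C(b.+1, n.+1))%:R = (b.+1)%:R * ('C(b, n.+1))%:R / (d.+1)%:R :> rat.
  rewrite HB. field. exact: nzS.
rewrite /xx.
set T := (Tn b n.+1)%:R. set C := ('C(b, n.+1))%:R in hC *.
rewrite (harmS d) -!natr1. field.
by rewrite hC !(addrC _ 1) !nzS.
Qed.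

Lemma On_harm n : On n = harmonic (2 * n + 1) - harmonic n / 2.
Proof.
elim: n => [|n IH].
  by rewrite /On /harmonic big_nat1 /= big_nat1 big_geq //; field.
rewrite OnS IH.
have -> : (2 * n.+1 + 1 = (2 * n + 1).+2)%N by lia.
rewrite !harmS.
have -> : (2 * n + 3 = (2 * n + 1).+2)%N by lia.
rewrite -!natr1 ?natrD ?natrM.
field.
by apply/and3P; split; apply/lt0r_neq0; have := ler0n rat n; lra.
Qed.

Theorem corollary2 (n : nat) :
  [/\ dsum n (2 * n + 2) (2 * n + 1)
        = (n.+1)%:R * \sum_(0 <= k < n.+1) ((2 * k + 1)%:R)^-1
      /\ (n.+1)%:R * \sum_(0 <= k < n.+1) ((2 * k + 1)%:R)^-1
        = (n.+1)%:R * (harmonic (2 * n + 1) - harmonic n / 2),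
      dsum n (2 * n + 3) (2 * n + 1) = (n.+1)%:R * harmonic n.+1,
      dsum n (2 * n + 1) (2 * n)
        = (2 ^+ (2 * n) / 2) / ('C(2 * n, n))%:R
          + (n%:R + 1 / 2) * (harmonic (2 * n + 1) - harmonic n / 2)
    & dsum n (2 * n + 2) (2 * n)
        = 2 ^+ (2 * n) / ('C(2 * n, n))%:R + (n%:R + 1 / 2) * harmonic n].
Proof.
have O := On_harm n. rewrite /On in O.
have hC := nzC n.
have e1 : (2 * n + 1 = (2 * n).+1)%N by lia.
have e2 : (2 * n + 2 = (2 * n).+2)%N by lia.
have e3 : (2 * n + 3 = (2 * n).+3)%N by lia.
split.
- split; last by rewrite O.
  rewrite e2 e1 dsum1; last by lia.
  by rewrite SS_odd /On; rewrite -!natr1; field.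
- rewrite e3 e1 dsum2; last by lia.
  have -> : ((2 * n).+1 - n = n.+1)%N by lia.
  rewrite SS_odd harmS (harmS n) On_harm.
  rewrite e1 harmS.
  rewrite -!natr1 ?natrD ?natrM. field.
  by apply/and3P; split; apply/lt0r_neq0; have := ler0n rat n; lra.
- rewrite -O -/(On n) e1 dsum1; last by lia.
  rewrite SS_even.
  set t := (2:rat) ^+ (2 * n).
  set C := ('C(2 * n, n))%:R : rat in hC *.
  rewrite -!natr1 ?natrD ?natrM. field. exact: hC.
- rewrite e2 dsum2; last by lia.
  have -> : (2 * n - n = n)%N by lia.
  rewrite SS_even On_harm e1 harmS.
  set t := (2:rat) ^+ (2 * n).
  set C := ('C(2 * n, n))%:R : rat in hC *.
  rewrite -!natr1 ?natrD ?natrM. field.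
  apply/andP; split; first exact: hC. apply/lt0r_neq0; have := ler0n rat n; lra.
Qed.
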